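(* Let $P$ be the transition matrix of a reducible classical Markov chain on a countable state space $\Lambda$, and consider the associated OQRW with $\mathcal H=\mathbb C$, $\mathcal K=\ell^2(\Lambda)$, $B^i_j=\sqrt{P(j,i)}U^i_j$ ($|U^i_j|=1$). Then there exists an initial probability measure $\rho^{(0)}$ on $\Lambda$ such that the QMC $(\rho^{(0)},(\mathcal E^{(n)})_{n\ge0})$ associated with this OQRW is reducible.
   Context: A stochastic matrix $P$ has nonnegative entries with $\sum_jP(i,j)=1$. $i\to j$ means $P^n(i,j)>0$ for some $n\in\mathbb N$; the chain is irreducible if $i\to j$ and $j\to i$ for all $i,j\in\Lambda$, and reducible otherwise. States of $\mathcal B$ are probability measures $\rho=(\rho_i)$ identified with $\sum_i\rho_i|i\rangle\langle i|$. The OQRW: $\mathcal M(\rho)=\sum_i(\sum_jB^i_j\rho_j\overline{B^i_j})|i\rangle\langle i|$, $\rho^{(n)}=\mathcal M^n(\rho^{(0)})$, $\Lambda(\rho^{(n)})=\{i:\rho^{(n)}_i\ne0\}$, $M^i_j=B^i_j|i\rangle\langle j|$. $\mathcal B$ is the commutative algebra of bounded diagonal operators $x=\sum_jx_j|j\rangle\langle j|$ on $\ell^2(\Lambda)$, $\mathcal A=\bigotimes_{k\in\mathbb Z_+}\mathcal B$. Transition expectations: $\mathcal E^{(n)}(x\otimes y)=\sum_{j\in\Lambda(\rho^{(n)})}\sum_i\frac{\mathrm{Tr}((\rho^{(n)}_j|j\rangle\langle j|)x)}{\rho^{(n)}_j}{M^i_j}^*yM^i_j$ (equivalently $\mathcal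 E^{(n)}(x\otimes y)=P_{\rho^{(n)}}xPy$ with $P_{\rho^{(n)}}$ the indicator of the support of $\rho^{(n)}$ and $(Py)_j=\sum_iP(j,i)y_i$). $\bar b(n)$ is the strong limit as $k\to\infty$ of $\mathcal E^{(n)}(I\otimes\cdots\otimes\mathcal E^{(n+k)}(I\otimes I))$; $E_{0]}(a_0\otimes\cdots\otimes a_n\otimes I\otimes\cdots)=\mathcal E^{(0)}(a_0\otimes\cdots\otimes\mathcal E^{(n)}(a_n\otimes\bar b(n+1)))$, extended to $\mathcal A$ by limits. The QMC is reducible if there exist a projection $p\in\mathcal B$, $p\ne0,I$, and $n_0$ with $E_{0]}(p_{[n_0}ap_{[n_0})=E_{0]}(a)$ for all $a\in\mathcal A$, where $p_{[n}=I\otimes\cdots\otimes I\otimes p\otimes p\otimes\cdots$ ($p$ from the $n$-th position on); otherwise irreducible. *)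

(* Defs.v *)
From Stdlib Require Import Reals List ClassicalEpsilon.
Open Scope R_scope.

Record Cx := mkCx { re : R ; im : R }.
Definition C0 : Cx := mkCx 0 0.
Definition C1 : Cx := mkCx 1 0.
Definition Creal (r : R) : Cx := mkCx r 0.
Definition Cadd (z w : Cx) : Cx := mkCx (re z + re w) (im z + im w).
Definition Csub (z w : Cx) : Cx := mkCx (re z - re w) (im z - im w).
Definition Cmul (z w : Cx) : Cx :=
  mkCx (re z * re w - im z * im w) (re z * im w + im z * re w).
Definition Cscale (r : R) (z : Cx) : Cx := mkCx (r * re z) (r * im z).
Definition Cconj (z : Cx) : Cx := mkCx (re z) (- im z).
Definition cmod2 (z : Cx) : R := re z * re z + im z * im z.

Section Sums.
Context {L : Type}.

Definition finsum (l : list L) (f : L -> R) : R :=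
  fold_right (fun x acc => f x + acc) 0 l.

(* f is summable with sum s (limit along the net of finite subsets) *)
Definition HasSum (f : L -> R) (s : R) : Prop :=
  forall eps, eps > 0 -> exists l0 : list L, NoDup l0 /\
    forall l, NoDup l -> incl l0 l -> Rabs (finsum l f - s) < eps.

(* the sum (chosen by epsilon; meaningful when f is summable) *)
Definition tsum (f : L -> R) : R := epsilon (inhabits 0) (HasSum f).
Definition ctsum (f : L -> Cx) : Cx :=
  mkCx (tsum (fun x => re (f x))) (tsum (fun x => im (f x))).
End Sums.

Definition stochastic {L : Type} (P : L -> L -> R) : Prop :=
  forall i, (forall j, 0 <= P i j) /\ HasSum (P i) 1.

(* Ppow P n = P^(n+1) *)
Fixpoint Ppow {L : Type} (P : L -> L -> R) (n : nat) : L -> L -> R :=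
  match n with
  | O => P
  | S k => fun i j => tsum (fun l => Ppow P k i l * P l j)
  end.

Definition leads {L : Type} (P : L -> L -> R) (i j : L) : Prop :=
  exists n, Ppow P n i j > 0.

Definition irreducible_chain {L : Type} (P : L -> L -> R) : Prop :=
  forall i j, leads P i j /\ leads P j i.
Definition reducible_chain {L : Type} (P : L -> L -> R) : Prop :=
  ~ irreducible_chain P.

Definition prob_measure {L : Type} (rho : L -> R) : Prop :=
  (forall i, 0 <= rho i) /\ HasSum rho 1.

Section QMC.
Context {L : Type} (P : L -> L -> R) (U : L -> L -> Cx) (rho0 : L -> R).

Definition Bop (i j : L) : Cx := Cscale (sqrt (P j i)) (U i j).

Definition Mmap (rho : L -> R) : L -> R :=
  fun i => tsum (fun j => re (Cmul (Cmul (Bop i j) (Creal (rho j))) (Cconj (Bop i j)))).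

Definition rho_n (n : nat) : L -> R := Nat.iter n Mmap rho0.

(* E^(n)(x (x) y), as a diagonal operator (function on L):
   entry j = [j in supp rho^(n)] (Tr(rho_j |j><j| x)/rho_j) * sum_i (M^i_j)^* y M^i_j *)
Definition Ecal (n : nat) (x y : L -> Cx) : L -> Cx :=
  fun j =>
    if Req_EM_T (rho_n n j) 0 then C0
    else Cmul (Cscale (/ rho_n n j) (Cscale (rho_n n j) (x j)))
              (ctsum (fun i => Cmul (Cmul (Cconj (Bop i j)) (y i)) (Bop i j))).

Definition Iop : L -> Cx := fun _ => C1.

(* strong operator convergence of diagonal operators on l^2(L) *)
Definition StrongLim (d : nat -> L -> Cx) (d0 : L -> Cx) : Prop :=
  forall v : L -> Cx, (exists s, HasSum (fun j => cmod2 (v j)) s) ->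
    Un_cv (fun k => tsum (fun j => cmod2 (Cmul (Csub (d k j) (d0 j)) (v j)))) 0.

Fixpoint iterE (n k : nat) : L -> Cx :=
  match k with
  | O => Ecal n Iop Iop
  | S k' => Ecal n Iop (iterE (S n) k')
  end.

Definition bbar (n : nat) : L -> Cx :=
  epsilon (inhabits Iop) (fun d => StrongLim (fun k => iterE n k) d).

(* E_{0]} on local elements, started at position n:
   Eseq n [a_n; ...; a_m] = E^(n)(a_n (x) ... E^(m)(a_m (x) bbar(m+1))) *)
Fixpoint Eseq (n : nat) (a : list (L -> Cx)) : L -> Cx :=
  match a with
  | nil => bbar n
  | x :: a' => Ecal n x (Eseq (S n) a')
  end.

(* E_{0]}(a_0 (x) ... (x) a_m (x) I (x) I ...) *)
Definition E0 (a : list (L -> Cx)) : L -> Cx := Eseq 0 a.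

Definition bounded_op (x : L -> Cx) : Prop :=
  exists M, forall j, cmod2 (x j) <= M.

Definition projection (p : L -> Cx) : Prop :=
  forall j, Cmul (p j) (p j) = p j /\ Cconj (p j) = p j.

(* truncation at length m + size a of  p_{[n0} a p_{[n0} *)
Definition sandwich (p : L -> Cx) (n0 m : nat) (a : list (L -> Cx)) : list (L -> Cx) :=
  map (fun k => if Nat.ltb k n0 then nth k a Iop
                else fun j => Cmul (Cmul (p j) (nth k a Iop j)) (p j))
      (seq 0 (m + length a)).

Definition QMC_reducible : Prop :=
  exists (p : L -> Cx) (n0 : nat),
    projection p /\ (exists j, p j <> C0) /\ (exists j, p j <> C1) /\
    forall a : list (L -> Cx), Forall bounded_op a ->
      StrongLim (fun m => E0 (sandwich p n0 m a)) (E0 a).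
End QMC.

(* Main.v *)
Require Import Defs.
From Stdlib Require Import Reals List.
From Stdlib Require Import ClassicalEpsilon Classical FunctionalExtensionality Lra Lia.
Import Defs.
Open Scope R_scope.

Section Sums1.
Context {L : Type}.

Definition Ldec (x y : L) : {x = y} + {x <> y} := excluded_middle_informative (x = y).

Lemma finsum_cons (x : L) l f : finsum (x :: l) f = f x + finsum l f.
Proof. reflexivity. Qed.

Lemma finsum_nil (f : L -> R) : finsum nil f = 0.
Proof. reflexivity. Qed.

Lemma finsum_le (l : list L) f g : (forall x, In x l -> f x <= g x) -> finsum l f <= finsum l g.
Proof.
  induction l as [|x l IH]; intros H; simpl; [lra|].
  assert (f x <= g x) by (apply H; left; auto).
  assert (finsum l f <= finsum l g) by (apply IH; intros; apply H; right; auto). lra.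
Qed.

Lemma finsum_zero (l : list L) f : (forall x, In x l -> f x = 0) -> finsum l f = 0.
Proof.
  induction l as [|x l IH]; intros H; simpl; [lra|].
  rewrite H by (left; auto). rewrite IH by (intros; apply H; right; auto). lra.
Qed.

Lemma finsum_nonneg (l : list L) f : (forall x, 0 <= f x) -> 0 <= finsum l f.
Proof. intros H. induction l; simpl; [lra|]. specialize (H a). lra. Qed.

Lemma finsum_plus (l : list L) f g : finsum l (fun x => f x + g x) = finsum l f + finsum l g.
Proof. induction l; simpl; [lra|]. rewrite IHl. lra. Qed.

Lemma finsum_scale (l : list L) c f : finsum l (fun x => c * f x) = c * finsum l f.
Proof. induction l; simpl; [lra|]. rewrite IHl. lra. Qed.

Lemma NoDup_remove' (l : list L) x : NoDup l -> NoDup (remove Ldec x l).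
Proof.
  induction l as [|y l IH]; intros H; simpl; [constructor|].
  inversion H; subst. destruct (Ldec x y).
  - apply IH; auto.
  - constructor; [|apply IH; auto]. intros Hin. apply in_remove in Hin. tauto.
Qed.



Lemma finsum_remove (l : list L) x f : NoDup l -> In x l ->
  finsum l f = f x + finsum (remove Ldec x l) f.
Proof.
  induction l as [|y l IH]; intros Hnd Hin; [destruct Hin|].
  inversion Hnd; subst. simpl. destruct (Ldec x y) as [e|n].
  - subst. rewrite notin_remove by auto. lra.
  - destruct Hin as [e|Hin]; [congruence|]. simpl. rewrite (IH H2 Hin). lra.
Qed.

Lemma finsum_incl_le (l0 l : list L) f : (forall x, 0 <= f x) -> NoDup l0 -> NoDup l -> incl l0 l ->
  finsum l0 f <= finsum l f.
Proof.
  intros Hf. revert l. induction l0 as [|x l0 IH]; intros l H0 H1 Hi.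
  - simpl. apply finsum_nonneg; auto.
  - inversion H0; subst. simpl. rewrite (finsum_remove l x f H1) by (apply Hi; left; auto).
    assert (finsum l0 f <= finsum (remove Ldec x l) f); [|lra].
    apply IH; auto. apply NoDup_remove'; auto.
    intros y Hy. apply in_in_remove. intro; subst; tauto. apply Hi; right; auto.
Qed.

Definition unionl (l1 l2 : list L) := nodup Ldec (l1 ++ l2).

Lemma unionl_nd l1 l2 : NoDup (unionl l1 l2).
Proof. apply NoDup_nodup. Qed.
Lemma unionl_l l1 l2 : incl l1 (unionl l1 l2).
Proof. intros x Hx. apply nodup_In. apply in_or_app; auto. Qed.
Lemma unionl_r l1 l2 : incl l2 (unionl l1 l2).
Proof. intros x Hx. apply nodup_In. apply in_or_app; auto. Qed.

Lemma abs_lt x e : Rabs x < e -> - e < x < e.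
Proof. unfold Rabs; destruct (Rcase_abs x); lra. Qed.
Lemma lt_abs x e : - e < x < e -> Rabs x < e.
Proof. unfold Rabs; destruct (Rcase_abs x); lra. Qed.

Lemma HasSum_unique (f : L -> R) s t : HasSum f s -> HasSum f t -> s = t.
Proof.
  intros Hs Ht. destruct (Req_dec s t) as [|Hne]; auto. exfalso.
  assert (He : Rabs (s - t) / 2 > 0) by (assert (s - t <> 0) by lra; pose proof (Rabs_pos_lt _ H); lra).
  destruct (Hs _ He) as [l0 [_ H0]]. destruct (Ht _ He) as [l1 [_ H1]].
  pose proof (abs_lt _ _ (H0 _ (unionl_nd l0 l1) (unionl_l l0 l1))).
  pose proof (abs_lt _ _ (H1 _ (unionl_nd l0 l1) (unionl_r l0 l1))).
  revert H H2 He. unfold Rabs at 1 2 3 4. destruct (Rcase_abs (s - t)); lra.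
Qed.

Lemma tsum_eq (f : L -> R) s : HasSum f s -> tsum f = s.
Proof.
  intros H. unfold tsum. apply (HasSum_unique f); auto.
  apply epsilon_spec. exists s; auto.
Qed.

Lemma HasSum_zero (f : L -> R) : (forall x, f x = 0) -> HasSum f 0.
Proof.
  intros H eps He. exists nil. split; [constructor|]. intros l _ _.
  rewrite finsum_zero by auto. rewrite Rminus_0_r, Rabs_R0. lra.
Qed.

Lemma tsum_zero (f : L -> R) : (forall x, f x = 0) -> tsum f = 0.
Proof. intros. apply tsum_eq, HasSum_zero; auto. Qed.

Lemma HasSum_plus (f g : L -> R) s t : HasSum f s -> HasSum g t -> HasSum (fun x => f x + g x) (s + t).
Proof.
  intros Hs Ht eps He.
  destruct (Hs (eps/2)) as [l0 [_ H0]]; [lra|]. destruct (Ht (eps/2)) as [l1 [_ H1]]; [lra|].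
  exists (unionl l0 l1). split; [apply unionl_nd|]. intros l Hl Hi.
  pose proof (abs_lt _ _ (H0 l Hl (incl_tran (unionl_l _ _) Hi))).
  pose proof (abs_lt _ _ (H1 l Hl (incl_tran (unionl_r _ _) Hi))).
  apply lt_abs. rewrite finsum_plus. lra.
Qed.

Lemma HasSum_single (f : L -> R) a : (forall x, x <> a -> f x = 0) -> HasSum f (f a).
Proof.
  intros H eps He. exists (a :: nil). split; [constructor; [intros []|constructor]|].
  intros l Hl Hi. rewrite (finsum_remove l a f Hl) by (apply Hi; left; auto).
  rewrite (finsum_zero (remove Ldec a l)).
  - apply lt_abs. lra.
  - intros x Hx. apply in_remove in Hx. apply H; tauto.
Qed.

Lemma HasSum_le (f g : L -> R) s t : HasSum f s -> HasSum g t -> (forall x, f x <= g x) -> s <= t.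
Proof.
  intros Hs Ht Hle. destruct (Rle_dec s t) as [|Hn]; auto. exfalso.
  destruct (Hs ((s-t)/2)) as [l0 [_ H0]]; [lra|]. destruct (Ht ((s-t)/2)) as [l1 [_ H1]]; [lra|].
  pose proof (abs_lt _ _ (H0 _ (unionl_nd l0 l1) (unionl_l l0 l1))).
  pose proof (abs_lt _ _ (H1 _ (unionl_nd l0 l1) (unionl_r l0 l1))).
  pose proof (finsum_le (unionl l0 l1) f g (fun x _ => Hle x)). lra.
Qed.

Lemma HasSum_finsum_le (f : L -> R) s l : (forall x, 0 <= f x) -> HasSum f s -> NoDup l -> finsum l f <= s.
Proof.
  intros Hf Hs Hl. destruct (Rle_dec (finsum l f) s) as [|Hn]; auto. exfalso.
  destruct (Hs (finsum l f - s)) as [l0 [_ H0]]; [lra|].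
  pose proof (abs_lt _ _ (H0 _ (unionl_nd l0 l) (unionl_l l0 l))).
  pose proof (finsum_incl_le l (unionl l0 l) f Hf Hl (unionl_nd _ _) (unionl_r _ _)). lra.
Qed.

Lemma HasSum_term_le (f : L -> R) s j : (forall x, 0 <= f x) -> HasSum f s -> f j <= s.
Proof.
  intros Hf Hs. pose proof (HasSum_finsum_le f s (j :: nil) Hf Hs).
  simpl in H. assert (NoDup (j :: nil)) by (constructor; [intros []|constructor]). specialize (H H0). lra.
Qed.

Lemma HasSum_nonneg (f : L -> R) s : (forall x, 0 <= f x) -> HasSum f s -> 0 <= s.
Proof. intros Hf Hs. apply (HasSum_le (fun _ => 0) f 0 s); auto. apply HasSum_zero; auto. Qed.

Lemma summable_bounded (f : L -> R) B : (forall x, 0 <= f x) ->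
  (forall l, NoDup l -> finsum l f <= B) -> exists s, HasSum f s /\ s <= B.
Proof.
  intros Hf HB.
  set (E := fun r => exists l, NoDup l /\ r = finsum l f).
  assert (Hb : bound E) by (exists B; intros r [l [Hl ->]]; auto).
  assert (Hne : exists r, E r) by (exists 0; exists nil; split; [constructor|reflexivity]).
  destruct (completeness E Hb Hne) as [s [Hub Hlub]].
  exists s. split.
  - intros eps He.
    assert (Hex : exists l, NoDup l /\ finsum l f > s - eps).
    { apply NNPP. intros Hn. assert (s <= s - eps); [|lra].
      apply Hlub. intros r [l [Hl ->]]. destruct (Rle_dec (finsum l f) (s - eps)); auto.
      exfalso. apply Hn. exists l. split; auto. lra. }
    destruct Hex as [l0 [Hl0 Hgt]]. exists l0. split; auto. intros l Hl Hi.
    pose proof (finsum_incl_le l0 l f Hf Hl0 Hl Hi).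
    assert (finsum l f <= s) by (apply Hub; exists l; auto).
    apply lt_abs. lra.
  - apply Hlub. intros r [l [Hl ->]]. auto.
Qed.

Lemma HasSum_finsum_lin {I : Type} (l : list I) (h : L -> I -> R) (s : I -> R) :
  (forall i, In i l -> HasSum (fun j => h j i) (s i)) ->
  HasSum (fun j => finsum l (fun i => h j i)) (finsum l s).
Proof.
  induction l as [|i l IH]; intros H; simpl.
  - apply HasSum_zero; auto.
  - apply (HasSum_plus (fun j => h j i) (fun j => finsum l (fun i0 => h j i0))).
    apply H; left; auto. apply IH; intros; apply H; right; auto.
Qed.

End Sums1.

Section Chain.
Context {L : Type} (P : L -> L -> R) (Hstoch : stochastic P).

Definition Tm (r : L -> R) (i : L) : R := tsum (fun j => r j * P j i).
Definition Inv (r : L -> R) : Prop := (forall i, 0 <= r i) /\ (forall l, NoDup l -> finsum l r <= 1).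

Lemma P_nn j i : 0 <= P j i.
Proof. apply (proj1 (Hstoch j)). Qed.
Lemma P_row j : HasSum (P j) 1.
Proof. apply (proj2 (Hstoch j)). Qed.
Lemma P_le1 j i : P j i <= 1.
Proof. apply (HasSum_term_le (P j)); [apply P_nn | apply P_row]. Qed.
Lemma P_fin j l : NoDup l -> finsum l (P j) <= 1.
Proof. intros. apply (HasSum_finsum_le (P j)); auto. apply P_nn. apply P_row. Qed.

Lemma Tm_sum r i : Inv r -> HasSum (fun j => r j * P j i) (Tm r i).
Proof.
  intros [Hn Hf].
  destruct (summable_bounded (fun j => r j * P j i) 1) as [s [Hs _]].
  - intros x. apply Rmult_le_pos; auto. apply P_nn.
  - intros l Hl. eapply Rle_trans; [|apply (Hf l Hl)]. apply finsum_le. intros x _.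
    pose proof (P_le1 x i). pose proof (P_nn x i). specialize (Hn x). nra.
  - unfold Tm. rewrite (tsum_eq _ s Hs). auto.
Qed.

Lemma Tm_inv r : Inv r -> Inv (Tm r).
Proof.
  intros Hr. pose proof Hr as [Hn Hf]. split.
  - intros i. apply (HasSum_nonneg (fun j => r j * P j i)); [|apply Tm_sum; auto].
    intros x. apply Rmult_le_pos; auto. apply P_nn.
  - intros l Hl.
    pose proof (HasSum_finsum_lin l (fun j i => r j * P j i) (Tm r) (fun i _ => Tm_sum r i Hr)) as H.
    destruct (summable_bounded r 1 Hn Hf) as [sr [Hsr Hsr1]].
    assert (finsum l (Tm r) <= sr); [|lra].
    apply (HasSum_le _ _ _ _ H Hsr). intros j. rewrite finsum_scale.
    pose proof (P_fin j l Hl). specialize (Hn j). nra.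
Qed.

Lemma Tm_pos r j i : Inv r -> r j > 0 -> P j i > 0 -> Tm r i > 0.
Proof.
  intros Hr Hj Hp. pose proof Hr as [Hn _].
  pose proof (HasSum_term_le (fun j => r j * P j i) (Tm r i) j) as H.
  assert (r j * P j i > 0) by nra.
  assert (r j * P j i <= Tm r i); [|lra]. apply H; [|apply Tm_sum; auto].
  intros x. apply Rmult_le_pos; auto. apply P_nn.
Qed.

Lemma Tm_supp r i : Tm r i <> 0 -> exists j, r j <> 0 /\ P j i <> 0.
Proof.
  intros H. apply NNPP. intros Hn. apply H. unfold Tm. apply tsum_zero.
  intros x. destruct (Req_dec (r x) 0) as [e|e]; [rewrite e; ring|].
  destruct (Req_dec (P x i) 0) as [e'|e']; [rewrite e'; ring|]. exfalso; apply Hn; eauto.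
Qed.

Lemma Ppow_inv a k : Inv (Ppow P k a).
Proof.
  induction k; simpl.
  - split. intros; apply P_nn. intros l Hl. apply P_fin; auto.
  - apply (Tm_inv _ IHk).
Qed.

Lemma leads_step a j i : leads P a j -> P j i > 0 -> leads P a i.
Proof.
  intros [n Hn] Hp. exists (S n). simpl. apply (Tm_pos (Ppow P n a) j i); auto. apply Ppow_inv.
Qed.

End Chain.

Section QMCp.
Context {L : Type} (P : L -> L -> R) (U : L -> L -> Cx) (Hstoch : stochastic P)
  (HU : forall i j, cmod2 (U i j) = 1) (rho0 : L -> R) (Hr0 : Inv rho0).

Lemma sqrt_sq j i : sqrt (P j i) * sqrt (P j i) = P j i.
Proof. apply sqrt_sqrt. apply (P_nn P Hstoch). Qed.

Lemma Mmap_summand (r : L -> R) i j :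
  re (Cmul (Cmul (Bop P U i j) (Creal (r j))) (Cconj (Bop P U i j))) = r j * P j i.
Proof.
  pose proof (sqrt_sq j i) as Hs. pose proof (HU i j) as Hu.
  unfold Bop, Cmul, Cscale, Creal, Cconj, cmod2 in *. simpl.
  destruct (U i j) as [ur ui]; simpl in *.
  set (s := sqrt (P j i)) in *. rewrite <- Hs.
  transitivity (s * s * (ur * ur + ui * ui) * r j); [ring|]. rewrite Hu. ring.
Qed.

Lemma Mmap_Tm r : Mmap P U r = Tm P r.
Proof.
  apply functional_extensionality. intros i. unfold Mmap, Tm. f_equal.
  apply functional_extensionality. intros j. apply Mmap_summand.
Qed.

Lemma rho_S n : rho_n P U rho0 (S n) = Tm P (rho_n P U rho0 n).
Proof. simpl. apply Mmap_Tm. Qed.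

Lemma rho_inv n : Inv (rho_n P U rho0 n).
Proof.
  induction n. exact Hr0. rewrite rho_S. apply Tm_inv; auto.
Qed.

Lemma propag n j i : rho_n P U rho0 n j <> 0 -> P j i <> 0 -> rho_n P U rho0 (S n) i <> 0.
Proof.
  intros H1 H2. rewrite rho_S. pose proof (rho_inv n) as Hi.
  assert (Tm P (rho_n P U rho0 n) i > 0); [|lra].
  apply (Tm_pos P Hstoch _ j); auto.
  pose proof (proj1 Hi j); lra. pose proof (P_nn P Hstoch j i); lra.
Qed.

Definition eqS n (f g : L -> Cx) := forall j, rho_n P U rho0 n j <> 0 -> f j = g j.

Definition ind n : L -> Cx := fun j => if Req_EM_T (rho_n P U rho0 n j) 0 then C0 else C1.

Lemma Cx_eq (z w : Cx) : re z = re w -> im z = im w -> z = w.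
Proof. destruct z, w; simpl; intros; subst; auto. Qed.

Lemma conj_summand (y : L -> Cx) i j :
  Cmul (Cmul (Cconj (Bop P U i j)) (y i)) (Bop P U i j) = Cscale (P j i) (y i).
Proof.
  pose proof (sqrt_sq j i) as Hs. pose proof (HU i j) as Hu.
  unfold Bop, Cmul, Cscale, Cconj, cmod2 in *.
  destruct (U i j) as [ur ui]; destruct (y i) as [yr yi]; simpl in *.
  set (s := sqrt (P j i)) in *. rewrite <- Hs.
  apply Cx_eq; simpl.
  - transitivity (s * s * (ur * ur + ui * ui) * yr); [ring|]. rewrite Hu. ring.
  - transitivity (s * s * (ur * ur + ui * ui) * yi); [ring|]. rewrite Hu. ring.
Qed.

Lemma Ecal_nz n x y j : rho_n P U rho0 n j <> 0 ->
  Ecal P U rho0 n x y j = Cmul (x j) (ctsum (fun i => Cscale (P j i) (y i))).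
Proof.
  intros H. unfold Ecal. destruct (Req_EM_T (rho_n P U rho0 n j) 0); [contradiction|].
  f_equal.
  - apply Cx_eq; simpl; field; auto.
  - f_equal. apply functional_extensionality; intros i. apply conj_summand.
Qed.

Lemma Ecal_z n x y j : rho_n P U rho0 n j = 0 -> Ecal P U rho0 n x y j = C0.
Proof.
  intros H. unfold Ecal. destruct (Req_EM_T (rho_n P U rho0 n j) 0); [auto|contradiction].
Qed.

Lemma Ecal_cong n x x' y y' : eqS n x x' -> eqS (S n) y y' ->
  Ecal P U rho0 n x y = Ecal P U rho0 n x' y'.
Proof.
  intros Hx Hy. apply functional_extensionality; intros j.
  destruct (Req_dec (rho_n P U rho0 n j) 0) as [e|e].
  - rewrite !Ecal_z; auto.
  - rewrite !Ecal_nz; auto. rewrite Hx; auto. f_equal. f_equal.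
    apply functional_extensionality; intros i.
    destruct (Req_dec (P j i) 0) as [e'|e'].
    + rewrite e'. apply Cx_eq; simpl; ring.
    + rewrite Hy; auto. eapply propag; eauto.
Qed.

Lemma Ecal_II n : Ecal P U rho0 n Iop Iop = ind n.
Proof.
  apply functional_extensionality; intros j. unfold ind.
  destruct (Req_EM_T (rho_n P U rho0 n j) 0) as [e|e].
  - apply Ecal_z; auto.
  - rewrite Ecal_nz; auto. unfold ctsum, Iop, Cscale, C1; simpl.
    rewrite (tsum_eq (fun i => P j i * 1) 1).
    rewrite (tsum_zero (fun i => P j i * 0)) by (intros; ring).
    apply Cx_eq; simpl; ring.
    replace (fun i => P j i * 1) with (P j). apply (P_row P Hstoch).
    apply functional_extensionality; intros; ring.
Qed.

Lemma ind_eqS n : eqS n (ind n) Iop.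
Proof.
  intros j H. unfold ind. destruct (Req_EM_T (rho_n P U rho0 n j) 0); [contradiction|auto].
Qed.

Lemma Ecal_I_ind n : Ecal P U rho0 n Iop (ind (S n)) = ind n.
Proof.
  rewrite <- (Ecal_II n). apply Ecal_cong. intros j _; auto. apply ind_eqS.
Qed.

Lemma iterE_ind k : forall n, iterE P U rho0 n k = ind n.
Proof.
  induction k; intros n; simpl.
  - apply Ecal_II.
  - rewrite IHk. apply Ecal_I_ind.
Qed.

Lemma StrongLim_const (d : L -> Cx) : StrongLim (fun _ => d) d.
Proof.
  intros v _. rewrite tsum_zero.
  - intros eps He. exists O. intros. unfold R_dist. rewrite Rminus_0_r, Rabs_R0. lra.
  - intros x. unfold cmod2, Cmul, Csub. simpl. ring.
Qed.

Lemma StrongLim_unique (d d0 : L -> Cx) : StrongLim (fun _ => d) d0 -> d = d0.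
Proof.
  intros H. apply functional_extensionality; intros j.
  set (v := fun x => if Ldec x j then C1 else C0).
  assert (Hv : exists s, HasSum (fun x => cmod2 (v x)) s).
  { exists (cmod2 (v j)). apply (HasSum_single (fun x => cmod2 (v x)) j). intros x Hx. unfold v. destruct (Ldec x j); [contradiction|].
    unfold cmod2, C0; simpl; ring. }
  specialize (H v Hv).
  set (c := cmod2 (Csub (d j) (d0 j))) in *.
  assert (Hz : forall x, x <> j -> (fun x => cmod2 (Cmul (Csub (d x) (d0 x)) (v x))) x = 0).
  { intros x Hx. simpl. unfold v. destruct (Ldec x j); [contradiction|].
    unfold cmod2, Cmul, C0; simpl. ring. }
  assert (Hc : tsum (fun x => cmod2 (Cmul (Csub (d x) (d0 x)) (v x))) = c).
  { rewrite (tsum_eq _ _ (HasSum_single _ j Hz)).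
    simpl. unfold v. destruct (Ldec j j); [|congruence]. unfold c, cmod2, Cmul, C1; simpl. ring. }
  simpl in H. rewrite Hc in H.
  assert (c0 : c = 0).
  { assert (0 <= c) by (unfold c, cmod2; nra).
    destruct (Req_dec c 0); auto. exfalso.
    destruct (H c) as [N HN]; [lra|]. specialize (HN N (le_n N)).
    unfold R_dist in HN. rewrite Rminus_0_r, Rabs_right in HN; lra. }
  unfold c, cmod2, Csub in c0. simpl in c0.
  destruct (Rplus_sqr_eq_0 _ _ c0) as [E1 E2].
  apply Cx_eq; lra.
Qed.

Lemma bbar_ind n : bbar P U rho0 n = ind n.
Proof.
  unfold bbar.
  replace (fun k => iterE P U rho0 n k) with (fun _ : nat => ind n)
    by (apply functional_extensionality; intros; rewrite iterE_ind; auto).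
  symmetry. apply StrongLim_unique.
  apply (epsilon_spec (inhabits Iop) (fun d => StrongLim (fun _ => ind n) d)).
  exists (ind n). apply StrongLim_const.
Qed.

Lemma eqS_sym n f g : eqS n f g -> eqS n g f.
Proof. intros H j Hj. symmetry; auto. Qed.

Lemma Eseq_I l : forall n, (forall k, eqS (n + k) (nth k l Iop) Iop) ->
  Eseq P U rho0 n l = bbar P U rho0 n.
Proof.
  induction l as [|x l IH]; intros n H; simpl; auto.
  rewrite IH.
  - rewrite !bbar_ind, <- (Ecal_I_ind n). apply Ecal_cong.
    + specialize (H O). rewrite Nat.add_0_r in H. exact H.
    + intros j _; auto.
  - intros k. specialize (H (S k)). rewrite Nat.add_succ_r in H. exact H.
Qed.

Lemma Eseq_eq l1 : forall l2 n, (forall k, eqS (n + k) (nth k l1 Iop) (nth k l2 Iop)) ->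
  Eseq P U rho0 n l1 = Eseq P U rho0 n l2.
Proof.
  induction l1 as [|x l1 IH]; intros l2 n H.
  - symmetry. apply Eseq_I. intros k. apply eqS_sym. specialize (H k). destruct k; auto.
  - destruct l2 as [|y l2].
    + apply Eseq_I. intros k. specialize (H k). destruct k; auto.
    + simpl. apply Ecal_cong.
      * specialize (H O). rewrite Nat.add_0_r in H. exact H.
      * intros j _. rewrite (IH l2 (S n)); auto. intros k. specialize (H (S k)). rewrite Nat.add_succ_r in H. exact H.
Qed.

End QMCp.

Lemma nth_sandwich {L : Type} (F : nat -> L -> Cx) N k d :
  (k < N)%nat -> nth k (map F (seq 0 N)) d = F k.
Proof.
  intros H. rewrite nth_indep with (d' := F O) by (rewrite length_map, length_seq; auto).
  rewrite map_nth, seq_nth; auto.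
Qed.

Theorem mainTheorem13 (L : Type) (P : L -> L -> R) (U : L -> L -> Cx)
  (Hcount : exists f : L -> nat, forall x y, f x = f y -> x = y)
  (Hstoch : stochastic P)
  (HU : forall i j, cmod2 (U i j) = 1)
  (Hred : reducible_chain P) :
  exists rho0 : L -> R, prob_measure rho0 /\ QMC_reducible P U rho0.
Proof.
  assert (Hab : exists a b, ~ leads P a b).
  { apply NNPP. intros Hn. apply Hred. intros i j.
    split; apply NNPP; intros Hl; apply Hn; eauto. }
  destruct Hab as [a [b Hab]].
  set (rho0 := fun x => if Ldec x a then 1 else 0).
  assert (Hr1 : HasSum rho0 1).
  { replace 1 with (rho0 a) by (unfold rho0; destruct (Ldec a a); congruence).
    apply HasSum_single. intros x Hx. unfold rho0. destruct (Ldec x a); [contradiction|auto]. }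
  assert (Hnn : forall x, 0 <= rho0 x) by (intros x; unfold rho0; destruct (Ldec x a); lra).
  assert (Hinv : Inv rho0).
  { split; auto. intros l Hl. apply (HasSum_finsum_le rho0); auto. }
  exists rho0. split; [split; auto|].
  assert (Hsupp : forall n k, rho_n P U rho0 (S n) k <> 0 -> leads P a k).
  { induction n; intros k Hk.
    - rewrite (rho_S P U Hstoch HU) in Hk. apply Tm_supp in Hk.
      destruct Hk as [j [Hj Hp]]. simpl in Hj. unfold rho0 in Hj.
      destruct (Ldec j a); [subst|lra]. exists O. simpl.
      pose proof (P_nn P Hstoch a k); lra.
    - rewrite (rho_S P U Hstoch HU) in Hk. apply Tm_supp in Hk.
      destruct Hk as [j [Hj Hp]]. apply (leads_step P Hstoch a j); auto.
      pose proof (P_nn P Hstoch j k); lra. }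
  set (p := fun k => if excluded_middle_informative (leads P a k) then C1 else C0).
  assert (C10 : C1 <> C0) by (unfold C1, C0; intros E; injection E; lra).
  exists p, 1%nat. split; [|split; [|split]].
  - intros j. unfold p. destruct (excluded_middle_informative _); split;
      apply Cx_eq; unfold Cmul, Cconj, C1, C0; simpl; ring.
  - assert (Hk : exists k, P a k > 0).
    { apply NNPP. intros Hn. assert (HS0 : HasSum (P a) 0).
      { apply HasSum_zero. intros x. pose proof (P_nn P Hstoch a x).
        destruct (Rle_dec (P a x) 0); [lra|]. exfalso; apply Hn; exists x; lra. }
      pose proof (HasSum_unique _ _ _ HS0 (P_row P Hstoch a)). lra. }
    destruct Hk as [k Hk]. exists k. unfold p.
    destruct (excluded_middle_informative _) as [|Hn]; auto.
    exfalso. apply Hn. exists O. simpl. auto.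
  - exists b. unfold p. destruct (excluded_middle_informative _); [contradiction|].
    intros E; apply C10; auto.
  - intros al _.
    replace (fun m => E0 P U rho0 (sandwich p 1 m al)) with (fun _ : nat => E0 P U rho0 al).
    { apply StrongLim_const. }
    apply functional_extensionality; intros m. unfold E0. symmetry.
    apply (Eseq_eq P U Hstoch HU rho0 Hinv). intros k. simpl.
    unfold sandwich.
    destruct (Nat.lt_ge_cases k (m + length al)) as [Hlt|Hge].
    + rewrite nth_sandwich by auto.
      destruct k as [|k']; simpl; [intros j _; auto|].
      intros j Hj. apply Hsupp in Hj. unfold p.
      destruct (excluded_middle_informative _); [|contradiction].
      apply Cx_eq; unfold Cmul, C1; simpl; ring.
    + rewrite nth_overflow by (rewrite length_map, length_seq; auto).
      rewrite nth_overflow by lia. intros j _; auto.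
Qed.
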